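(* Let $A=(a_{ij})$ be a nonnegative weighted adjacency matrix on vertices $v_1,\dots,v_n$ with all out-degrees $o(v_i)=\sum_j a_{ij}>0$, let $P=D_o^{-1}A$ with $D_o=\operatorname{diag}(o(v_1),\dots,o(v_n))$, let $\nu(v_j)=\sum_{\ell=1}^n p_{\ell j}$, assume $\nu(v_j)>0$ for all $j$, set $D_\nu=\operatorname{diag}(\nu(v_1),\dots,\nu(v_n))$ and $Q=PD_\nu^{-1}P^\top$. Let $(x^{(k)},y^{(k)})$, $k=1,2,\dots$, be i.i.d. pairs where $x^{(k)}$ is uniformly distributed on $\{v_1,\dots,v_n\}$ and, given $x^{(k)}=v_i$, $y^{(k)}=v_j$ with probability $p_{ij}$. Let $\phi=(\phi_1,\dots,\phi_n)^\top$ with $\phi_i$ the indicator function of $v_i$, and for each $m$ let $\Phi_x=[\phi(x^{(1)}),\dots,\phi(x^{(m)})]$, $\Phi_y=[\phi(y^{(1)}),\dots,\phi(y^{(m)})]\in\mathbb{R}^{n\times m}$, $C_{xx}=\frac1m\Phi_x\Phi_x^\top$, $C_{yy}=\frac1m\Phi_y\Phi_y^\top$, $C_{xy}=C_{yx}^\top=\frac1m\Phi_x\Phi_y^\top$, and $\widehat K^{(m)}=C_{xx}^+C_{xy}$, $\widehat P^{(m)}=C_{xx}^+C_{yx}$, $\widehat F^{(m)}=C_{xx}^+C_{xy}C_{yy}^+C_{yx}$, where $^+$ denotes the Moore–Penrose pseudoinverse. Then, as $m\to\infty$ (almost surely), $\widehat K^{(m)}\to P$, $\widehat P^{(m)}\to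 P^\top$, and $\widehat F^{(m)}\to Q$.
   Context: $P$ is the transition matrix of the random walk on the graph; $\widehat K^{(m)}$, $\widehat P^{(m)}$, $\widehat F^{(m)}$ are the extended dynamic mode decomposition (EDMD) estimates of the Koopman, Perron–Frobenius and forward-backward operators from the data pairs, using the basis of vertex indicator functions (one-hot encodings). *)

(* Defs.v *)
From HB Require Import structures.
From mathcomp Require Import all_boot all_order all_algebra.
From mathcomp Require Import all_classical all_reals all_analysis.
Set Implicit Arguments. Unset Strict Implicit. Unset Printing Implicit Defensive.
Import Order.TTheory GRing.Theory Num.Theory numFieldNormedType.Exports.
Local Open Scope classical_set_scope.
Local Open Scope ring_scope.

(* B is a Moore–Penrose pseudoinverse of A: the four Penrose conditions
   (over the reals the conjugate transpose is the transpose). *)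
Definition is_mpinv (R : realType) (p q : nat) (A : 'M[R]_(p, q))
  (B : 'M[R]_(q, p)) : Prop :=
  [/\ A *m B *m A = A, B *m A *m B = B,
      (A *m B)^T = A *m B & (B *m A)^T = B *m A].

(* The Moore–Penrose pseudoinverse A^+ (exists and is unique for every
   real matrix; chosen via classical choice). *)
Definition mpinv (R : realType) (p q : nat) (A : 'M[R]_(p, q)) : 'M[R]_(q, p) :=
  xget 0 (fun B => is_mpinv A B).

Definition outdeg (R : realType) (n : nat) (A : 'M[R]_n) (i : 'I_n) : R :=
  \sum_(j < n) A i j.

Definition transP (R : realType) (n : nat) (A : 'M[R]_n) : 'M[R]_n :=
  invmx (diag_mx (\row_i outdeg A i)) *m A.

Definition nu (R : realType) (n : nat) (A : 'M[R]_n) (j : 'I_n) : R :=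
  \sum_(l < n) transP A l j.

Definition fbQ (R : realType) (n : nat) (A : 'M[R]_n) : 'M[R]_n :=
  transP A *m invmx (diag_mx (\row_j nu A j)) *m (transP A)^T.

Definition phi (R : realType) (n : nat) (v : 'I_n) : 'cV[R]_n := delta_mx v 0.

(* Phi = [phi(z^(1)), ..., phi(z^(m))] for the sample z^(1..m) (indexed 0..m-1) *)
Definition Phi (R : realType) (n m : nat) (z : nat -> 'I_n) : 'M[R]_(n, m) :=
  \matrix_(i < n, k < m) phi R (z k) i 0.

Definition Cov (R : realType) (n m : nat) (a b : nat -> 'I_n) : 'M[R]_n :=
  (m%:R)^-1 *: (Phi R m a *m (Phi R m b)^T).

Definition Khat (R : realType) (n m : nat) (x y : nat -> 'I_n) : 'M[R]_n :=
  mpinv (Cov R m x x) *m Cov R m x y.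
Definition Phat (R : realType) (n m : nat) (x y : nat -> 'I_n) : 'M[R]_n :=
  mpinv (Cov R m x x) *m Cov R m y x.
Definition Fhat (R : realType) (n m : nat) (x y : nat -> 'I_n) : 'M[R]_n :=
  mpinv (Cov R m x x) *m Cov R m x y *m mpinv (Cov R m y y) *m Cov R m y x.

Definition pair_event (T : Type) (n : nat) (X Y : nat -> T -> 'I_n)
  (k : nat) (ij : 'I_n * 'I_n) : set T :=
  [set t | X k t = ij.1 /\ Y k t = ij.2].

(* The pairs (X k, Y k), k in nat, are mutually independent (finite-valued
   random variables: product rule over every finite family of indices and
   every choice of values). *)
Definition indep_pairs (R : realType) (d : measure_display) (T : measurableType d)
  (Pr : probability T R) (n : nat) (X Y : nat -> T -> 'I_n) : Prop :=
  forall (s : seq nat) (f : nat -> 'I_n * 'I_n), uniq s ->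
    Pr (\big[setI/setT]_(k <- s) pair_event X Y k (f k)) =
    (\prod_(k <- s) Pr (pair_event X Y k (f k)))%E.

Definition walk_pair_law (R : realType) (d : measure_display) (T : measurableType d)
  (Pr : probability T R) (n : nat) (Pm : 'M[R]_n) (X Y : nat -> T -> 'I_n) : Prop :=
  forall k i j,
    Pr [set t | X k t = i] = (n%:R^-1)%:E /\
    Pr (pair_event X Y k (i, j)) = (Pr [set t | X k t = i] * (Pm i j)%:E)%E.

Definition sample_measurable (d : measure_display) (T : measurableType d)
  (n : nat) (X Y : nat -> T -> 'I_n) : Prop :=
  forall k i j, measurable [set t | X k t = i] /\ measurable [set t | Y k t = j].

Definition mx_cvg (R : realType) (n : nat) (M : nat -> 'M[R]_n) (L : 'M[R]_n) : Prop :=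
  forall i j, (fun m : nat => M m i j) @ \oo --> (L i j : R).

(* Main.v *)
Require Import Defs.
From HB Require Import structures.
From mathcomp Require Import all_boot all_order all_algebra.
From mathcomp Require Import all_classical all_reals all_analysis.
Import Order.TTheory GRing.Theory Num.Theory numFieldNormedType.Exports.
Local Open Scope classical_set_scope.
Local Open Scope ring_scope.
From mathcomp Require Import ring lra.
Set Implicit Arguments. Unset Strict Implicit.
Lemma no_pair m (a b c d : 'I_m) :
  ~~ [|| (a == b) && (c == d), (a == c) && (b == d) | (a == d) && (b == c)] ->
  [|| ((a == a) + (a == b) + (a == c) + (a == d) == 1)%N,
      ((b == a) + (b == b) + (b == c) + (b == d) == 1)%N,
      ((c == a) + (c == b) + (c == c) + (c == d) == 1)%N |
      ((d == a) + (d == b) + (d == c) + (d == d) == 1)%N].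
Proof.
rewrite !eqxx.
repeat match goal with |- context [?x == ?y] =>
  case: (eqVneq x y) => [?|?]; [subst|] end; by [].
Qed.
Lemma prod_pow_ind (R : comRingType) m (F : 'I_m -> R) (a : 'I_m) :
  \prod_k F k ^+ (k == a) = F a.
Proof.
rewrite (bigD1 a) //= eqxx expr1 big1 ?mulr1 // => k /negbTE ->.
by rewrite expr0.
Qed.

Lemma sum_eqI (R : comRingType) m (x : 'I_m) : \sum_(d < m) (x == d)%:R = 1 :> R.
Proof.
rewrite (bigD1 x) //= eqxx big1 ?addr0 // => d /negbTE; rewrite eq_sym => ->.
by [].
Qed.

Lemma sum_eqI' (R : comRingType) m (x : 'I_m) : \sum_(d < m) (d == x)%:R = 1 :> R.
Proof. by under eq_bigr do rewrite eq_sym; rewrite sum_eqI. Qed.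

Lemma ex4 (R : comRingType) m (F : 'I_m -> R) : (\sum_k F k)^+4 =
  \sum_a \sum_b \sum_c \sum_d F a * F b * F c * F d.
Proof.
rewrite !exprS expr0 mulr1 mulr_suml; apply eq_bigr => a _.
rewrite mulr_suml mulr_sumr; apply eq_bigr => b _.
rewrite mulr_suml !mulr_sumr; apply eq_bigr => c _.
rewrite !mulr_sumr; apply eq_bigr => d _.
by rewrite !mulrA.
Qed.

Lemma ex4w (R : comRingType) m (w : R) (F : 'I_m -> R) : w * (\sum_k F k)^+4 =
  \sum_a \sum_b \sum_c \sum_d w * (F a * F b * F c * F d).
Proof.
rewrite ex4 mulr_sumr; apply eq_bigr => a _.
rewrite mulr_sumr; apply eq_bigr => b _.
rewrite mulr_sumr; apply eq_bigr => c _.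
by rewrite mulr_sumr.
Qed.

Lemma sum_andI (R : comRingType) m (u : bool) (x : 'I_m) :
  \sum_(d < m) (u && (x == d))%:R = u%:R :> R.
Proof. by case: u => /=; [rewrite sum_eqI | rewrite big1]. Qed.

Lemma count3 (R : comRingType) m :
  \sum_(a < m) \sum_(b < m) \sum_(c < m) \sum_(d < m)
   (((a == b) && (c == d))%:R + ((a == c) && (b == d))%:R + ((a == d) && (b == c))%:R)
  = 3 * (m%:R) ^+ 2 :> R.
Proof.
transitivity (\sum_(a < m) \sum_(b < m) \sum_(c < m)
   ((a == b)%:R + (a == c)%:R + (b == c)%:R : R)).
  apply eq_bigr => a _; apply eq_bigr => b _; apply eq_bigr => c _.
  by rewrite !big_split /= !sum_andI; under eq_bigr do rewrite andbC; rewrite sum_andI.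
transitivity (\sum_(a < m) \sum_(b < m) ((a == b)%:R *+ m + 2%:R : R)).
  apply eq_bigr => a _; apply eq_bigr => b _.
  by rewrite !big_split /= sumr_const card_ord !sum_eqI -addrA.
transitivity (\sum_(a < m) (3%:R *+ m : R)).
  apply eq_bigr => a _; rewrite big_split /= sumrMnl sum_eqI sumr_const card_ord.
  by rewrite -mulrnDl; congr (_ *+ _); rewrite -natr1 addrC.
by rewrite sumr_const card_ord -mulrnA -(mulr_natr (3 : R) (m * m)) natrM expr2.
Qed.
Lemma moment4 (R : realType) (V : finType) (q z : V -> R) m :
  (forall v, 0 <= q v) -> \sum_v q v = 1 -> (forall v, `|z v| <= 1) ->
  \sum_v q v * z v = 0 ->
  \sum_(g : {ffun 'I_m -> V}) (\prod_k q (g k)) * (\sum_k z (g k)) ^+ 4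
    <= 3 * (m%:R) ^+ 2.
Proof.
move=> q0 q1 z1 qz0.
pose M := fun e : nat => \sum_v q v * z v ^+ e.
have M1 : M 1%N = 0 by rewrite /M; under eq_bigr do rewrite expr1.
have Mle e : `|M e| <= 1.
  rewrite -q1 /M; apply: le_trans (ler_norm_sum _ _ _) _.
  apply: ler_sum => v _; rewrite normrM normrX ger0_norm //.
  by rewrite ler_piMr // exprn_ile1.
pose e (a b c d k : 'I_m) := ((k == a) + (k == b) + (k == c) + (k == d))%N.
have key a b c d : \sum_(g : {ffun 'I_m -> V})
    (\prod_k q (g k)) * (z (g a) * z (g b) * z (g c) * z (g d))
    = \prod_k M (e a b c d k).
  rewrite /M bigA_distr_bigA; apply eq_bigr => g _.
  rewrite big_split /=; congr (_ * _).
  by rewrite /e; under eq_bigr do rewrite !exprD; rewrite !big_split /= !prod_pow_ind.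
have bnd a b c d : \prod_k M (e a b c d k) <=
    ((a == b) && (c == d))%:R + ((a == c) && (b == d))%:R + ((a == d) && (b == c))%:R.
  case H: [|| (a == b) && (c == d), (a == c) && (b == d) | (a == d) && (b == c)].
  - apply: le_trans (_ : 1 <= _).
      apply: le_trans (ler_norm _) _; rewrite normr_prod.
      by apply: prodr_ile1 => k _; rewrite normr_ge0 Mle.
    have h1 := ler0n R ((a == b) && (c == d)); have h2 := ler0n R ((a == c) && (b == d)).
    have h3 := ler0n R ((a == d) && (b == c)).
    by case/or3P: H => H; rewrite H /= in h1 h2 h3 *; lra.
  - have := @no_pair m a b c d (negbT H).
    have Z k : e a b c d k = 1%N -> \prod_k M (e a b c d k) = 0.
      by move=> Ek; rewrite (bigD1 k) //= Ek M1 mul0r.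
    rewrite -!(eq_sym 1%N).
    by case/or4P => /eqP/esym/Z ->; rewrite !addr_ge0 ?ler0n.
under eq_bigr do rewrite ex4w.
apply: (@le_trans _ _ (\sum_(a < m) \sum_(b < m) \sum_(c < m) \sum_(d < m)
   (((a == b) && (c == d))%:R + ((a == c) && (b == d))%:R + ((a == d) && (b == c))%:R))).
  rewrite [leLHS]exchange_big; apply: ler_sum => a _.
  rewrite [leLHS]exchange_big; apply: ler_sum => b _.
  rewrite [leLHS]exchange_big; apply: ler_sum => c _.
  rewrite [leLHS]exchange_big; apply: ler_sum => d _.
  by rewrite key bnd.
by rewrite count3.
Qed.
Definition freq (R : realType) (V : eqType) (T : Type) (Z : nat -> T -> V)
  (v0 : V) (m : nat) (t : T) : R :=
  m%:R^-1 * \sum_(k < m) (Z k t == v0)%:R.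

Definition pat (V : Type) (T : Type) (Z : nat -> T -> V) m (g : {ffun 'I_m -> V}) : set T :=
  [set t | forall i : 'I_m, Z i t = g i].
Arguments pat {V T} Z {m} g.
Arguments freq {R V T} Z v0 m t.

Lemma pat_as_big (V : Type) (T : Type) (Z : nat -> T -> V) m (g : {ffun 'I_m -> V}) (v0 : V) :
  pat Z g = \big[setI/setT]_(k <- map val (enum 'I_m))
     [set t | Z k t = (if insub k is Some i then g i else v0)].
Proof.
rewrite -bigcap_seq; apply/seteqP; split => t /=.
  move=> H k /mapP[i _ ->]; rewrite valK; exact: H.
move=> H i; have := H (val i); rewrite valK; apply.
by apply/mapP; exists i; rewrite ?mem_enum.
Qed.

Lemma pat_meas d (T : measurableType d) (V : Type) (Z : nat -> T -> V)
  (Zm : forall k v, measurable [set t | Z k t = v]) m (g : {ffun 'I_m -> V}) :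
  measurable (pat Z g).
Proof.
case: m g => [|m] g.
  rewrite (_ : pat Z g = setT) //; apply/seteqP; split => t //= _ [] //.
rewrite (pat_as_big Z g (g ord0)); exact: bigsetI_measurable.
Qed.

Lemma pat_prob (R : realType) d (T : measurableType d) (Pr : probability T R)
  (V : Type) (Z : nat -> T -> V) (q : V -> R)
  (Zind : forall (s : seq nat) (f : nat -> V), uniq s ->
     Pr (\big[setI/setT]_(k <- s) [set t | Z k t = f k]) = (\prod_(k <- s) q (f k))%:E)
  (v0 : V) m (g : {ffun 'I_m -> V}) :
  Pr (pat Z g) = (\prod_i q (g i))%:E.
Proof.
rewrite (pat_as_big Z g v0) Zind; last by rewrite map_inj_uniq ?enum_uniq //; exact: val_inj.
by rewrite big_map big_enum /=; under eq_bigr do rewrite valK.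
Qed.

Lemma union_prob (R : realType) d (T : measurableType d) (Pr : probability T R)
  (G : choiceType) (r : seq G) (P : pred G) (E : G -> set T) :
  uniq r -> (forall g, measurable (E g)) ->
  (forall g g', g != g' -> E g `&` E g' = set0) ->
  Pr (\big[setU/set0]_(g <- r | P g) E g) = (\sum_(g <- r | P g) Pr (E g))%E.
Proof.
move=> + mE dE; elim: r => [|g r IH] /=; first by rewrite !big_nil measure0.
case/andP => gr ur; rewrite !big_cons; case: (P g); last exact: IH ur.
rewrite measureU //; first by congr (_ + _); exact: IH ur.
  exact: bigsetU_measurable.
rewrite -(bigcup_seq_cond r E P); apply/seteqP; split => t //= [Et [g' /andP[g'r _] Et']].
have gg' : g != g' by apply: contraNneq gr => ->.
by have := dE _ _ gg'; rewrite -subset0 => /(_ t) /=; apply.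
Qed.

Lemma event_as_union (V : finType) (T : Type) (Z : nat -> T -> V) m
  (B : pred {ffun 'I_m -> V}) :
  [set t | B [ffun i : 'I_m => Z i t]] = \big[setU/set0]_(g <- enum {ffun 'I_m -> V} | B g) pat Z g.
Proof.
rewrite -bigcup_seq_cond; apply/seteqP; split => t /=.
  move=> Bt; exists [ffun i : 'I_m => Z i t]; first by rewrite /= mem_enum Bt.
  by move=> i; rewrite ffunE.
move=> [g /andP[_ Bg] Pg]; suff -> : [ffun i : 'I_m => Z i t] = g by [].
by apply/ffunP => i; rewrite ffunE Pg.
Qed.

Lemma pat_disj (V : eqType) (T : Type) (Z : nat -> T -> V) m (g g' : {ffun 'I_m -> V}) :
  g != g' -> pat Z g `&` pat Z g' = set0.
Proof.
move=> gg'; apply/seteqP; split => t //= [H1 H2]; move/negP: gg'; apply.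
by apply/eqP/ffunP => i; rewrite -H1 H2.
Qed.
Lemma bad_prob (R : realType) d (T : measurableType d) (Pr : probability T R)
  (V : finType) (Z : nat -> T -> V) (q : V -> R)
  (Zm : forall k v, measurable [set t | Z k t = v])
  (Zind : forall (s : seq nat) (f : nat -> V), uniq s ->
     Pr (\big[setI/setT]_(k <- s) [set t | Z k t = f k]) = (\prod_(k <- s) q (f k))%:E)
  (q0 : forall v, 0 <= q v) (q1 : \sum_v q v = 1) (v0 : V) m eps :
  (0 < m)%N -> 0 < eps ->
  (Pr [set t | (eps <= `|freq Z v0 m t - q v0|)%R] <= (3 / (m%:R ^+ 2 * eps ^+ 4))%R%:E)%E.
Proof.
move=> m0 e0.
pose B := fun g : {ffun 'I_m -> V} =>
  eps <= `|m%:R^-1 * \sum_(k < m) (g k == v0)%:R - q v0|.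
have E t : freq Z v0 m t = m%:R^-1 * \sum_(k < m) ([ffun i : 'I_m => Z i t] k == v0)%:R.
  by rewrite /freq; congr (_ * _); apply: eq_bigr => k _; rewrite ffunE.
have -> : [set t | eps <= `|freq Z v0 m t - q v0|] = [set t | B [ffun i : 'I_m => Z i t]].
  by apply/seteqP; split => t /=; rewrite /B -E.
rewrite event_as_union union_prob //; last 3 first.
- exact: enum_uniq.
- by move=> g; exact: pat_meas.
- by move=> g g'; exact: pat_disj.
under eq_bigr do rewrite (pat_prob Zind v0).
rewrite sumEFin lee_fin.
pose z := fun v : V => (v == v0)%:R - q v0.
have qv0 : 0 <= q v0 <= 1.
  rewrite q0 /= -q1 (bigD1 v0) //= lerDl; exact: sumr_ge0.
have z1 v : `|z v| <= 1.
  by rewrite ler_norml /z; case: (v == v0) => /=; case/andP: qv0 => ? ?; apply/andP; split; lra.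
have qz : \sum_v q v * z v = 0.
  rewrite /z; under eq_bigr do rewrite mulrBr; rewrite sumrB -mulr_suml q1 mul1r.
  rewrite (bigD1 v0) //= eqxx mulr1 big1 ?addr0 ?subrr // => v /negbTE ->.
  by rewrite mulr0.
have Sz (g : {ffun 'I_m -> V}) :
    \sum_(k < m) z (g k) = m%:R * (m%:R^-1 * \sum_(k < m) (g k == v0)%:R - q v0).
  rewrite /z sumrB sumr_const card_ord mulrBr mulrA mulfV ?mul1r ?mulr_natl //.
  by rewrite pnatr_eq0 -lt0n.
have mpos : 0 < m%:R :> R by rewrite ltr0n.
pose c := (m%:R * eps) ^+ 4.
have cpos : 0 < c by rewrite /c exprn_gt0 // mulr_gt0.
apply: (@le_trans _ _ (\sum_(g <- enum {ffun 'I_m -> V})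
     (\prod_i q (g i)) * ((\sum_(k < m) z (g k)) ^+ 4 / c))).
  rewrite big_mkcond /=; apply: ler_sum => g _.
  have w0 : 0 <= \prod_i q (g i) by apply: prodr_ge0.
  case Bg: (B g).
    rewrite -[X in X <= _]mulr1 ler_wpM2l // ler_pdivlMr // mul1r /c Sz.
    have -> : (m%:R * (m%:R^-1 * \sum_(k < m) (g k == v0)%:R - q v0)) ^+ 4 =
       `|m%:R * (m%:R^-1 * \sum_(k < m) (g k == v0)%:R - q v0)| ^+ 4.
      by rewrite -[4%N]/(2 * 2)%N !exprM real_normK // num_real.
    apply: lerXn2r; rewrite ?nnegrE ?normr_ge0 //.
      by rewrite mulr_ge0 // ltW.
    by rewrite normrM (ger0_norm (ltW mpos)) ler_pM2l.
  apply: mulr_ge0 => //; apply: divr_ge0; last exact: ltW.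
  by rewrite -[4%N]/(2 * 2)%N exprM; exact: sqr_ge0.
rewrite big_enum /=.
under eq_bigr do rewrite mulrA.
rewrite -mulr_suml.
have M4 := @moment4 _ _ _ _ m q0 q1 z1 qz.
rewrite (eq_bigl predT) //.
apply: le_trans (ler_wpM2r _ M4) _.
  by rewrite invr_ge0 ltW.
rewrite (_ : 3 * m%:R ^+ 2 / c = 3 / (m%:R ^+ 2 * eps ^+ 4)) //.
rewrite /c; field.
by rewrite !gt_eqF.
Qed.
Lemma inv_sq_sum (R : realType) N :
  \sum_(0 <= i < N) ((i.+1)%:R ^+ 2)^-1 <= 2 - 2 / (N.+1)%:R :> R.
Proof.
elim: N => [|N IH]; first by rewrite big_nil mulr1n invr1 mulr1 subrr.
rewrite big_nat_recr //=; apply: le_trans (lerD IH (lexx _)) _.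
set x : R := (N.+1)%:R.
have x1 : 1 <= x by rewrite /x ler1n.
have x0 : 0 < x by apply: lt_le_trans x1.
have -> : (N.+2)%:R = x + 1 :> R by rewrite /x -natr1.
rewrite -subr_ge0.
have -> : 2 - 2 / (x + 1) - (2 - 2 / x + (x ^+ 2)^-1) = (x - 1) / (x ^+ 2 * (x + 1)).
  field; have hN : 0 <= N%:R :> R := ler0n _ _; by apply/andP; split; rewrite gt_eqF //; lra.
apply: divr_ge0; first by rewrite subr_ge0.
by apply: mulr_ge0; [exact: sqr_ge0 | rewrite addr_ge0 // ltW].
Qed.

Lemma freq_meas d (T : measurableType d) (V : finType) (Z : nat -> T -> V)
  (Zm : forall k v, measurable [set t | Z k t = v]) (R : realType) (h : R -> bool) v0 m :
  measurable [set t | h (freq Z v0 m t)].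
Proof.
have E t : freq Z v0 m t = m%:R^-1 * \sum_(k < m) ([ffun i : 'I_m => Z i t] k == v0)%:R.
  by rewrite /freq; congr (_ * _); apply: eq_bigr => k _; rewrite ffunE.
have -> : [set t | h (freq Z v0 m t)] = [set t |
   (fun g : {ffun 'I_m -> V} => h (m%:R^-1 * \sum_(k < m) (g k == v0)%:R)) [ffun i : 'I_m => Z i t]].
  by apply/seteqP; split => t /=; rewrite -E.
rewrite (event_as_union Z (fun g : {ffun 'I_m -> V} => h (m%:R^-1 * \sum_(k < m) (g k == v0)%:R))).
apply: bigsetU_measurable => g _; exact: pat_meas.
Qed.

Lemma slln_eps (R : realType) d (T : measurableType d) (Pr : probability T R)
  (V : finType) (Z : nat -> T -> V) (q : V -> R)
  (Zm : forall k v, measurable [set t | Z k t = v])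
  (Zind : forall (s : seq nat) (f : nat -> V), uniq s ->
     Pr (\big[setI/setT]_(k <- s) [set t | Z k t = f k]) = (\prod_(k <- s) q (f k))%:E)
  (q0 : forall v, 0 <= q v) (q1 : \sum_v q v = 1) (v0 : V) eps :
  0 < eps ->
  {ae Pr, forall t, exists N, forall k, (N <= k)%N -> `|freq Z v0 k.+1 t - q v0| < eps}.
Proof.
move=> e0.
pose F k := [set t | (eps <= `|freq Z v0 k.+1 t - q v0|)%R].
have mF k : measurable (F k) by exact: (freq_meas Zm (fun x => eps <= `|x - q v0|)).
have sumF : (\sum_(k <oo) Pr (F k) < +oo)%E.
  apply: (@le_lt_trans _ _ (2 * (3 / eps ^+ 4))%:E); last exact: ltry.
  apply: lime_le; first by apply: is_cvg_nneseries => n _ _; exact: measure_ge0.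
  apply: nearW => N.
  apply: (@le_trans _ _ (\sum_(0 <= k < N) ((3 / eps ^+ 4) * ((k.+1)%:R ^+ 2)^-1)%:E)%E).
    apply: lee_sum => k _; apply: le_trans (bad_prob Zm Zind q0 q1 v0 _ e0) _ => //.
    rewrite lee_fin le_eqVlt; apply/orP; left; apply/eqP.
    by field; rewrite ?gt_eqF // ?exprn_gt0 // ltr0n.
  rewrite sumEFin lee_fin -mulr_sumr [leRHS]mulrC ler_wpM2l //.
    by rewrite divr_ge0 // ltW // exprn_gt0.
  apply: le_trans (inv_sq_sum R N) _.
  by rewrite lerBlDr lerDl divr_ge0.
have N0 : Pr (lim_sup_set F) = 0%E := lim_sup_set_cvg0 mF sumF.
exists (lim_sup_set F); split => //.
  apply: bigcap_measurable => // k _; exact: bigcup_measurable.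
move=> t /= nH n _; apply: contrapT => nE; apply: nH; exists n => k nk.
rewrite ltNge; apply/negP => Fk; apply: nE; exists k => //.
Qed.
Lemma slln (R : realType) d (T : measurableType d) (Pr : probability T R)
  (V : finType) (Z : nat -> T -> V) (q : V -> R)
  (Zm : forall k v, measurable [set t | Z k t = v])
  (Zind : forall (s : seq nat) (f : nat -> V), uniq s ->
     Pr (\big[setI/setT]_(k <- s) [set t | Z k t = f k]) = (\prod_(k <- s) q (f k))%:E)
  (q0 : forall v, 0 <= q v) (q1 : \sum_v q v = 1) :
  {ae Pr, forall t, forall v0, freq Z v0 m t @[m --> \oo] --> q v0}.
Proof.
have H : {ae Pr, forall t, forall r : nat, forall v0, exists N, forall k, (N <= k)%N ->
    `|freq Z v0 k.+1 t - q v0| < (r.+1%:R)^-1}.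
  apply: ae_foralln => r; apply: filter_forall => v0; apply: slln_eps => //.
apply: filterS H => t H v0.
apply/cvgrPdist_lt => e e0.
have [r re] : exists r : nat, (r.+1%:R)^-1 < e.
  have h := truncnS_gt (e^-1); exists (Num.truncn e^-1).
  by move: h; rewrite -ltf_pV2 ?posrE ?invr_gt0 ?ltr0n // invrK; apply.
have [N HN] := H r v0.
exists N.+1 => // m /= Nm.
case: m Nm => // k Nk.
by rewrite distrC; apply: lt_trans (HN k Nk) re.
Qed.
Lemma cvg_sumR (R : realType) (I : Type) (r : seq I) (f : I -> nat -> R) (a : I -> R) :
  (forall i, f i n @[n --> \oo] --> a i) ->
  (\sum_(i <- r) f i n) @[n --> \oo] --> \sum_(i <- r) a i.
Proof.
move=> H; elim: r => [|i r IH].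
  rewrite big_nil; under eq_cvg do rewrite big_nil; exact: cvg_cst.
rewrite big_cons; under eq_cvg do rewrite big_cons.
exact: cvgD.
Qed.

Lemma mp_unique (R : realType) p q (A : 'M[R]_(p, q)) B C :
  is_mpinv A B -> is_mpinv A C -> B = C.
Proof.
case=> h1 h2 h3 h4 [g1 g2 g3 g4].
have k1 : B^T *m A^T = A *m B by rewrite -trmx_mul h3.
have k2 : A^T = A^T *m (A *m C) by rewrite -{1}g1 trmx_mul g3.
have e1 : B = B *m A *m C.
  transitivity (B *m (A *m B)); first by rewrite mulmxA h2.
  by rewrite -k1 k2 (mulmxA B^T) k1 !mulmxA h2.
have k1' : A^T *m C^T = C *m A by rewrite -trmx_mul g4.
have k2' : A^T = (B *m A) *m A^T.
  by rewrite -{1}h1 -mulmxA trmx_mul h4.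
have e2 : C = B *m A *m C.
  transitivity ((C *m A) *m C); first by rewrite g2.
  rewrite -g4 trmx_mul k2' -[B *m A *m A^T *m C^T]mulmxA k1'.
  by rewrite -(mulmxA (B *m A)) g2.
by rewrite {1}e1 -e2.
Qed.
Lemma mpinv_diag (R : realType) n (d : 'rV[R]_n) :
  mpinv (diag_mx d) = diag_mx (\row_i (d 0 i)^-1).
Proof.
have K (x : R) : x * x^-1 * x = x.
  by have [->|x0] := eqVneq x 0; [rewrite !mul0r | rewrite mulfV ?mul1r].
have K' (x : R) : x^-1 * x * x^-1 = x^-1.
  by have [->|x0] := eqVneq x 0; [rewrite invr0 !mul0r | rewrite mulVf ?mul1r].
have H : is_mpinv (diag_mx d) (diag_mx (\row_i (d 0 i)^-1)).
  split; rewrite ?mulmx_diag ?tr_diag_mx //; congr diag_mx; apply/rowP => j;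
    rewrite !mxE ?K ?K' //.
rewrite /mpinv; apply: (mp_unique (xgetPex 0 (ex_intro _ _ H)) H).
Qed.

Lemma invmx_diag (R : realType) n (d : 'rV[R]_n) : (forall i, d 0 i != 0) ->
  invmx (diag_mx d) = diag_mx (\row_i (d 0 i)^-1).
Proof.
move=> d0.
have h : diag_mx d *m diag_mx (\row_i (d 0 i)^-1) = 1%:M.
  by rewrite mulmx_diag; apply/matrixP => i j; rewrite !mxE mulfV.
have [u _] := mulmx1_unit h.
by rewrite -[RHS]mul1mx -(mulVmx u) -mulmxA h mulmx1.
Qed.

Lemma natr_and (R : pzRingType) (a b : bool) : ((a && b)%:R : R) = a%:R * b%:R.
Proof. by case: a; case: b; rewrite ?mulr1 ?mulr0. Qed.

Lemma Cov_entry (R : realType) n m (a b : nat -> 'I_n) i j :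
  Cov R m a b i j = m%:R^-1 * \sum_(k < m) ((a k == i) && (b k == j))%:R.
Proof.
rewrite /Cov !mxE; congr (_ * _); apply: eq_bigr => k _.
by rewrite /Phi /phi !mxE eqxx !andbT natr_and (eq_sym i) (eq_sym j).
Qed.

Lemma Cov_diag (R : realType) n m (a : nat -> 'I_n) :
  Cov R m a a = diag_mx (\row_i (m%:R^-1 * \sum_(k < m) (a k == i)%:R)).
Proof.
apply/matrixP => i j; rewrite Cov_entry !mxE.
have [<-|ij] := eqVneq i j.
  by rewrite mulr1n; under eq_bigr do rewrite andbb.
rewrite mulr0n big1 ?mulr0 // => k _.
by case: eqP => //= ->; rewrite (negbTE ij).
Qed.

Lemma Khat_entry (R : realType) n m (a b : nat -> 'I_n) i j :
  Khat R m a b i j = (m%:R^-1 * \sum_(k < m) (a k == i)%:R)^-1 * Cov R m a b i j.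
Proof. by rewrite /Khat Cov_diag mpinv_diag mul_diag_mx mxE; congr (_ * _); rewrite !mxE. Qed.

Lemma Phat_entry (R : realType) n m (a b : nat -> 'I_n) i j :
  Phat R m a b i j = (m%:R^-1 * \sum_(k < m) (a k == i)%:R)^-1 * Cov R m b a i j.
Proof. by rewrite /Phat Cov_diag mpinv_diag mul_diag_mx mxE; congr (_ * _); rewrite !mxE. Qed.

Lemma Fhat_entry (R : realType) n m (a b : nat -> 'I_n) i j :
  Fhat R m a b i j = \sum_l ((m%:R^-1 * \sum_(k < m) (a k == i)%:R)^-1 * Cov R m a b i l *
      (m%:R^-1 * \sum_(k < m) (b k == l)%:R)^-1) * Cov R m b a l j.
Proof.
rewrite /Fhat !Cov_diag !mpinv_diag [LHS]mxE; apply: eq_bigr => l _.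
by rewrite mul_mx_diag mxE mul_diag_mx mxE; congr (_ * _ * _ * _); rewrite !mxE.
Qed.
Unset Implicit Arguments.

Theorem mainTheorem2 (R : realType) (n : nat) (A : 'M[R]_n)
  (A_ge0 : forall i j, 0 <= A i j)
  (o_gt0 : forall i, 0 < outdeg A i)
  (nu_gt0 : forall j, 0 < nu A j)
  (d : measure_display) (T : measurableType d) (Pr : probability T R)
  (X Y : nat -> T -> 'I_n)
  (Hmeas : sample_measurable X Y)
  (Hindep : indep_pairs Pr X Y)
  (Hlaw : walk_pair_law Pr (transP A) X Y) :
  {ae Pr, forall t,
    [/\ mx_cvg (fun m => Khat R m (X^~ t) (Y^~ t)) (transP A),
        mx_cvg (fun m => Phat R m (X^~ t) (Y^~ t)) (transP A)^T &
        mx_cvg (fun m => Fhat R m (X^~ t) (Y^~ t)) (fbQ A)]}.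
Proof.
have [n0|npos] := posnP n.
  by subst n; apply: aeW => t; split => -[].
set P := transP A.
have Pij i j : P i j = (outdeg A i)^-1 * A i j.
  rewrite /P /transP invmx_diag; first by rewrite mul_diag_mx !mxE.
  by move=> k; rewrite mxE gt_eqF.
have P0 i j : 0 <= P i j by rewrite Pij mulr_ge0 // invr_ge0 ltW.
have P1 i : \sum_j P i j = 1.
  by under eq_bigr do rewrite Pij; rewrite -mulr_sumr mulVf // gt_eqF.
have Q i j : fbQ A i j = \sum_l P i l * (nu A l)^-1 * P j l.
  rewrite /fbQ invmx_diag; last by move=> k; rewrite mxE gt_eqF.
  rewrite !mxE; apply: eq_bigr => l _; rewrite mul_mx_diag !mxE //.
pose Z k t := (X k t, Y k t).
pose q (v : 'I_n * 'I_n) := n%:R^-1 * P v.1 v.2.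
have nR : n%:R != 0 :> R by rewrite pnatr_eq0 -lt0n.
have q0 v : 0 <= q v by rewrite /q mulr_ge0 // invr_ge0.
have q1 : \sum_v q v = 1.
  have -> : \sum_v q v = \sum_i \sum_j q (i, j).
    by rewrite pair_bigA; apply: eq_bigr => -[i j].
  rewrite /q /=.
  under eq_bigr do rewrite -mulr_sumr P1 mulr1.
  by rewrite sumr_const card_ord -(mulr_natr (n%:R^-1)) mulVf.
have Zm k v : measurable [set t | Z k t = v].
  have -> : [set t | Z k t = v] = [set t | X k t = v.1] `&` [set t | Y k t = v.2].
    rewrite /Z; case: v => a b; apply/seteqP; split => t /=.
      by case=> -> ->.
    by case=> -> ->.
  by case: (Hmeas k v.1 v.2) => ? ?; exact: measurableI.
have Zind s f : uniq s -> Pr (\big[setI/setT]_(k <- s) [set t | Z k t = f k]) =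
    (\prod_(k <- s) q (f k))%:E.
  move=> us.
  have -> : \big[setI/setT]_(k <- s) [set t | Z k t = f k] =
      \big[setI/setT]_(k <- s) pair_event X Y k (f k).
    apply: eq_bigr => k _; rewrite /pair_event /Z; case: (f k) => a b.
    by apply/seteqP; split => t /=; case=> -> ->.
  rewrite Hindep // -prodEFin; apply: eq_bigr => k _.
  by case: (f k) => a b; have [h1 h2] := Hlaw k a b; rewrite h2 h1.
have H := slln Zm Zind q0 q1.
apply: filterS H => t H.
set x := X^~ t; set y := Y^~ t.
have Cxy m i j : Cov R m x y i j = freq Z (i, j) m t.
  by rewrite Cov_entry /freq; congr (_ * _); apply: eq_bigr => k _; rewrite /Z xpair_eqE.
have Cyx m i j : Cov R m y x i j = Cov R m x y j i.
  by rewrite !Cov_entry; congr (_ * _); apply: eq_bigr => k _; rewrite andbC.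
have hxy i j : (fun m => Cov R m x y i j) @ \oo --> n%:R^-1 * P i j.
  by under eq_cvg do rewrite Cxy; exact: (H (i, j)).
have hyx i j : (fun m => Cov R m y x i j) @ \oo --> n%:R^-1 * P j i.
  by under eq_cvg do rewrite Cyx; exact: hxy.
have fxE m i : m%:R^-1 * \sum_(k < m) (x k == i)%:R = \sum_j Cov R m x y i j.
  under [RHS]eq_bigr do rewrite Cov_entry.
  rewrite -mulr_sumr; congr (_ * _); rewrite exchange_big; apply: eq_bigr => k _.
  by under eq_bigr do rewrite natr_and; rewrite -mulr_sumr sum_eqI mulr1.
have fyE m l : m%:R^-1 * \sum_(k < m) (y k == l)%:R = \sum_i Cov R m x y i l.
  under [RHS]eq_bigr do rewrite Cov_entry.
  rewrite -mulr_sumr; congr (_ * _); rewrite exchange_big; apply: eq_bigr => k _.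
  by under eq_bigr do rewrite natr_and; rewrite -mulr_suml sum_eqI mul1r.
have hx i : (fun m => m%:R^-1 * \sum_(k < m) (x k == i)%:R) @ \oo --> (n%:R^-1 : R).
  under eq_cvg do rewrite fxE.
  have -> : n%:R^-1 = \sum_j n%:R^-1 * P i j :> R by rewrite -mulr_sumr P1 mulr1.
  exact: cvg_sumR.
have hy l : (fun m => m%:R^-1 * \sum_(k < m) (y k == l)%:R) @ \oo --> n%:R^-1 * nu A l.
  under eq_cvg do rewrite fyE.
  rewrite /nu mulr_sumr; exact: cvg_sumR.
have nuv l : nu A l != 0 by rewrite gt_eqF.
have ninv : n%:R^-1 != 0 :> R by rewrite invr_eq0.
split => i j.
- under eq_cvg do rewrite Khat_entry.
  have -> : P i j = (n%:R^-1)^-1 * (n%:R^-1 * P i j) by rewrite mulKf.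
  by apply: cvgM; [apply: cvgV; [exact: ninv | exact: hx] | exact: hxy].
- under eq_cvg do rewrite Phat_entry.
  have -> : P^T i j = (n%:R^-1)^-1 * (n%:R^-1 * P j i) by rewrite mxE mulKf.
  by apply: cvgM; [apply: cvgV; [exact: ninv | exact: hx] | exact: hyx].
- under eq_cvg do rewrite Fhat_entry.
  rewrite Q; apply: cvg_sumR => l.
  have -> : P i l * (nu A l)^-1 * P j l = (n%:R^-1)^-1 * (n%:R^-1 * P i l) *
      (n%:R^-1 * nu A l)^-1 * (n%:R^-1 * P j l).
    by field; rewrite nuv nR.
  apply: cvgM; last exact: hyx.
  apply: cvgM; last by apply: cvgV; [exact: mulf_neq0 | exact: hy].
  by apply: cvgM; [apply: cvgV; [exact: ninv | exact: hx] | exact: hxy].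
Qed.
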